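(* Let $A\in\{0,1\}^{m\times m}$, $B\in\{0,1\}^{n\times n}$ be non-degenerate, $\varphi:X_A\to X_B$ an elementary conjugacy and $R_\varphi$ as defined below. For $a\in\{1,\dots,m\}$, $b\in\{1,\dots,n\}$ the following are equivalent: (i) $(R_\varphi)_{a,b}=1$; (ii) there is $a'$ with $\varphi_{\mathrm{loc}}(a,a')=b$; (iii) there is $b'$ with $\varphi^{-1}_{\mathrm{loc}}(b',b)=a$; (iv) there are $x\in X_A$, $y\in X_B$ with $x_0=a$, $y_0=b$ and $y=\varphi(x)$.
   Context: Non-degenerate: no zero rows or columns. $X_A=\{x\in\{1,\dots,m\}^{\mathbb Z}:A_{x_\ell,x_{\ell+1}}=1\ \forall\ell\}$ with the left shift; a conjugacy is a shift-commuting homeomorphism. $\varphi:X_A\to X_B$ is elementary if there are $\varphi_{\mathrm{loc}}$ (on pairs $(a,a')$ with $A_{a,a'}=1$) and $\varphi^{-1}_{\mathrm{loc}}$ (on pairs $(b,b')$ with $B_{b,b'}=1$) with $\varphi(x)_i=\varphi_{\mathrm{loc}}(x_i,x_{i+1})$ and $\varphi^{-1}(y)_i=\varphi^{-1}_{\mathrm{loc}}(y_{i-1},y_i)$ for all $x,y,i$. $R_\varphi\in\{0,1\}^{m\times n}$ is defined by $(R_\varphi)_{a,b}=1$ iff there is $a'$ with $A_{a,a'}=1$ and $\varphi_{\mathrm{loc}}(a,a')=b$. Existential quantifiers over pairs range over allowed pairs. *)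

(* Defs.v *)
From mathcomp Require Import all_boot all_order all_algebra.
Set Implicit Arguments. Unset Strict Implicit. Unset Printing Implicit Defensive.
Import Order.TTheory GRing.Theory Num.Theory.
Local Open Scope ring_scope.

(* 0/1 matrices are represented as boolean matrices: A_{a,a'} = 1 iff A a a'.
   Symbols {1..m} are represented by 'I_m; bi-infinite sequences by int -> 'I_m. *)

Definition nondegenerate01 (m : nat) (A : 'M[bool]_m) : Prop :=
  (forall i : 'I_m, exists j : 'I_m, A i j) /\ (forall j : 'I_m, exists i : 'I_m, A i j).

Definition inSFT (m : nat) (A : 'M[bool]_m) (x : int -> 'I_m) : Prop :=
  forall l : int, A (x l) (x (l + 1)).

Definition shift (k : nat) (x : int -> 'I_k) : int -> 'I_k := fun i => x (i + 1).

Definition agree (k : nat) (N : nat) (x x' : int -> 'I_k) : Prop :=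
  forall i : int, (`|i| <= N)%N -> x i = x' i.

(* continuity (product topology of discrete spaces) of f restricted to the set X *)
Definition continuous_on (k l : nat) (X : (int -> 'I_k) -> Prop)
  (f : (int -> 'I_k) -> (int -> 'I_l)) : Prop :=
  forall x, X x -> forall N : nat, exists M : nat,
    forall x', X x' -> agree M x x' -> agree N (f x) (f x').

Definition is_conjugacy (m n : nat) (A : 'M[bool]_m) (B : 'M[bool]_n)
  (phi : (int -> 'I_m) -> (int -> 'I_n)) (psi : (int -> 'I_n) -> (int -> 'I_m)) : Prop :=
  (forall x, inSFT A x -> inSFT B (phi x)) /\
  (forall y, inSFT B y -> inSFT A (psi y)) /\
  (forall x, inSFT A x -> forall i, psi (phi x) i = x i) /\
  (forall y, inSFT B y -> forall i, phi (psi y) i = y i) /\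
  continuous_on (inSFT A) phi /\
  continuous_on (inSFT B) psi /\
  (forall x, inSFT A x -> forall i, phi (shift x) i = shift (phi x) i).

(* the conjugacy phi (inverse psi) is elementary with local rules philoc, psiloc
   (only their values on allowed pairs matter) *)
Definition is_elementary (m n : nat) (A : 'M[bool]_m) (B : 'M[bool]_n)
  (phi : (int -> 'I_m) -> (int -> 'I_n)) (psi : (int -> 'I_n) -> (int -> 'I_m))
  (philoc : 'I_m -> 'I_m -> 'I_n) (psiloc : 'I_n -> 'I_n -> 'I_m) : Prop :=
  (forall x, inSFT A x -> forall i, phi x i = philoc (x i) (x (i + 1))) /\
  (forall y, inSFT B y -> forall i, psi y i = psiloc (y (i - 1)) (y i)).

Definition Rphi (m n : nat) (A : 'M[bool]_m) (philoc : 'I_m -> 'I_m -> 'I_n)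
  : 'M[bool]_(m, n) :=
  \matrix_(a < m, b < n) [exists a' : 'I_m, A a a' && (philoc a a' == b)].

(* Main.v *)
Require Import Defs.
From mathcomp Require Import all_boot all_order all_algebra.
From mathcomp Require Import zify.
Import GRing.Theory.
Local Open Scope ring_scope.

Section Ext.
Variables (m : nat) (A : 'M[bool]_m).
Hypothesis nd : nondegenerate01 A.

Definition succA (i : 'I_m) : 'I_m := odflt i [pick j | A i j].
Definition predA (i : 'I_m) : 'I_m := odflt i [pick j | A j i].

Lemma succA_ok i : A i (succA i).
Proof.
rewrite /succA; case: pickP => [j /= -> //|H].
by case: nd => [H1 _]; case: (H1 i) => j Hj; move: (H j); rewrite Hj.
Qed.

Lemma predA_ok i : A (predA i) i.
Proof.
rewrite /predA; case: pickP => [j /= -> //|H].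
by case: nd => [_ H1]; case: (H1 i) => j Hj; move: (H j); rewrite Hj.
Qed.

Lemma extend (c d : 'I_m) : A c d ->
  exists x : int -> 'I_m, [/\ inSFT A x, x 0 = c & x 1 = d].
Proof.
move=> Acd.
pose fwd := fix f (k : nat) : 'I_m := if k is k'.+1 then succA (f k') else d.
pose bwd := fix f (k : nat) : 'I_m := if k is k'.+1 then predA (f k') else c.
pose x := fun l : int => match l with
  | Posz k => if k is k'.+1 then fwd k' else c
  | Negz k => bwd k.+1 end.
exists x; split => //.
case=> [[|k]|[|k]].
- by [].
- have -> : (Posz k.+1 + 1 = Posz k.+2)%R by lia.
  exact: succA_ok.
- have -> : (Negz 0 + 1 = Posz 0)%R by lia.
  exact: predA_ok.
- have -> : (Negz k.+1 + 1 = Negz k)%R by lia.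
  exact: predA_ok.
Qed.
End Ext.

Theorem mainTheorem10 (m n : nat) (A : 'M[bool]_m) (B : 'M[bool]_n)
  (phi : (int -> 'I_m) -> (int -> 'I_n)) (psi : (int -> 'I_n) -> (int -> 'I_m))
  (philoc : 'I_m -> 'I_m -> 'I_n) (psiloc : 'I_n -> 'I_n -> 'I_m) :
  nondegenerate01 A -> nondegenerate01 B ->
  is_conjugacy A B phi psi ->
  is_elementary A B phi psi philoc psiloc ->
  forall (a : 'I_m) (b : 'I_n),
    (Rphi A philoc a b <-> exists a' : 'I_m, A a a' /\ philoc a a' = b) /\
    (Rphi A philoc a b <-> exists b' : 'I_n, B b' b /\ psiloc b' b = a) /\
    (Rphi A philoc a b <->
       exists (x : int -> 'I_m) (y : int -> 'I_n),
         [/\ inSFT A x, inSFT B y, x 0 = a, y 0 = b & forall i, y i = phi x i]).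
Proof.
move=> ndA ndB [phiB [psiA [psiphi [phipsi _]]]] [phil psil] a b.
have E1 : Rphi A philoc a b <-> exists a' : 'I_m, A a a' /\ philoc a a' = b.
  rewrite /Rphi mxE; split.
  - by case/existsP => a' /andP [H1 /eqP H2]; exists a'.
  - by case=> a' [H1 H2]; apply/existsP; exists a'; rewrite H1 H2 eqxx.
have E3 : (exists a' : 'I_m, A a a' /\ philoc a a' = b) <->
       exists (x : int -> 'I_m) (y : int -> 'I_n),
         [/\ inSFT A x, inSFT B y, x 0 = a, y 0 = b & forall i, y i = phi x i].
  split.
  - case=> a' [H1 H2].
    have [x [Hx Hx0 Hx1]] := @extend _ A ndA _ _ H1.
    exists x, (phi x); split => //; first exact: phiB.
    by rewrite phil // Hx0 Hx1.
  - case=> x [y [Hx Hy Hx0 Hy0 Hxy]].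
    exists (x 1); split; first by rewrite -Hx0; exact: (Hx 0).
    by rewrite -Hx0 -Hy0 Hxy phil.
have E4 : (exists b' : 'I_n, B b' b /\ psiloc b' b = a) <->
       exists (x : int -> 'I_m) (y : int -> 'I_n),
         [/\ inSFT A x, inSFT B y, x 0 = a, y 0 = b & forall i, y i = phi x i].
  split.
  - case=> b' [H1 H2].
    have [y [Hy Hy0 Hy1]] := @extend _ B ndB _ _ H1.
    pose y' := fun i : int => y (i + 1).
    have Hy' : inSFT B y' by move=> l; exact: Hy.
    exists (psi y'), y'; split.
    + exact: psiA.
    + exact: Hy'.
    + by rewrite psil // /y' /= Hy0 Hy1.
    + by rewrite /y' Hy1.
    + by move=> i; rewrite phipsi.
  - case=> x [y [Hx Hy Hx0 Hy0 Hxy]].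
    exists (y (0 - 1)); split.
    + by have := Hy (0 - 1); rewrite subrK Hy0.
    + have Hp : inSFT B (phi x) by exact: phiB.
      rewrite -Hx0 -(psiphi x Hx 0) (psil (phi x) Hp 0) -!Hxy.
      by rewrite -Hy0.
split; first exact: E1.
split.
- by rewrite E1 E3 -E4.
- by rewrite E1 E3.
Qed.
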